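(* Let $T$ be a tree and $x\in\mathsf L_T$. Let $S\subset T$ be the subgraph with vertices those $\alpha\in V(T)$ with $x\in\mathsf L_T(\alpha)$, and edges those $\{\alpha,\beta\}\in E(T)$ with both $\alpha,\beta$ such vertices. Then $S$ is a tree.
   Context: A tree is a nonempty finite connected acyclic graph with vertex set $V(T)$ and edge set $E(T)$ (two-element subsets of $V(T)$). Arboreal singularity: for $\alpha\in V(T)$ let $\mathsf L_T(\alpha)=\mathbb R^{V(T)\setminus\{\alpha\}}$ with coordinates $x_\gamma(\alpha)$; $\mathsf L_T$ is the quotient of $\coprod_\alpha\mathsf L_T(\alpha)$ by the equivalence relation generated by identifying, for each edge $\{\alpha,\beta\}$, $\{x_\gamma(\alpha)\}\sim\{x_\gamma(\beta)\}$ whenever $x_\beta(\alpha)=x_\alpha(\beta)\ge0$ and $x_\gamma(\alpha)=x_\gamma(\beta)$ for $\gamma\ne\alpha,\beta$; each $\mathsf L_T(\alpha)$ is regarded as a subspace of $\mathsf L_T$. *)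

(* Defs.v *)
From mathcomp Require Import all_boot.
From Stdlib Require Import Reals Relations.
Set Implicit Arguments. Unset Strict Implicit. Unset Printing Implicit Defensive.

(* A simple graph on a finite vertex type V: edges {a,b} are encoded by a
   symmetric irreflexive boolean relation e. *)
Definition simple_graph (V : finType) (e : rel V) : Prop :=
  (forall a, ~~ e a a) /\ (forall a b, e a b = e b a).

Definition induced (V : finType) (e : rel V) (A : V -> Prop) : relation V :=
  fun a b => e a b /\ A a /\ A b.

Definition has_cycle_on (V : finType) (e : rel V) (A : V -> Prop) : Prop :=
  exists (c : seq V) (x0 : V), (3 <= size c)%N /\ uniq c /\
    forall i, (i < size c)%N ->
      induced e A (nth x0 c i) (nth x0 c ((i.+1) %% size c)).

Definition tree_on (V : finType) (e : rel V) (A : V -> Prop) : Prop :=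
  (exists a, A a) /\
  (forall a b, A a -> A b -> clos_refl_trans V (induced e A) a b) /\
  ~ has_cycle_on e A.

Definition is_tree (V : finType) (e : rel V) : Prop :=
  simple_graph e /\ tree_on e (fun _ => True).

(* Arboreal singularity L_T.  A point of L_T(alpha) = R^{V \ {alpha}} is
   represented by a pair (alpha, f) with f : V -> R and the irrelevant
   coordinate normalised to f alpha = 0. *)
Definition apt (V : finType) : Type := (V * (V -> R))%type.

Definition wf_apt (V : finType) (p : apt V) : Prop := p.2 p.1 = 0%R.

(* Generating identification along an edge {alpha,beta}:
   x_beta(alpha) = x_alpha(beta) >= 0 and x_gamma(alpha) = x_gamma(beta)
   for gamma <> alpha, beta. *)
Definition arb_step (V : finType) (e : rel V) (p q : apt V) : Prop :=
  wf_apt p /\ wf_apt q /\ e p.1 q.1 /\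
  p.2 q.1 = q.2 p.1 /\ (0 <= p.2 q.1)%R /\
  (forall g, g != p.1 -> g != q.1 -> p.2 g = q.2 g).

Definition arb_equiv (V : finType) (e : rel V) : relation (apt V) :=
  fun p q => p = q \/ clos_refl_sym_trans (apt V) (arb_step e) p q.

Definition in_chart (V : finType) (e : rel V) (p : apt V) (a : V) : Prop :=
  exists f : V -> R, wf_apt (a, f) /\ arb_equiv e p (a, f).

(* Main.v *)
Require Import Defs.
From mathcomp Require Import all_boot.
From Stdlib Require Import Reals Relations.

Lemma crt_sym_gen (A : Type) (R : relation A) :
  (forall a b, R a b -> R b a) ->
  forall a b, clos_refl_trans A R a b -> clos_refl_trans A R b a.
Proof.
move=> Hs a b H; elim: H => [x y /Hs Hxy|x|x y z _ H1 _ H2].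
- exact: rt_step.
- exact: rt_refl.
- exact: rt_trans H2 H1.
Qed.

Lemma equiv_ext (V : finType) (e : rel V) (p q r : apt V) :
  arb_equiv e p q -> clos_refl_sym_trans (apt V) (arb_step e) q r ->
  arb_equiv e p r.
Proof.
move=> [->|Hpq] Hqr; right => //.
exact: rst_trans Hpq Hqr.
Qed.

Lemma inch (V : finType) (e : rel V) (p q : apt V) :
  arb_equiv e p q -> wf_apt q -> in_chart e p q.1.
Proof. by case: q => a f H w; exists f. Qed.

Lemma L (V : finType) (e : rel V) (p : apt V) :
  (forall a b, e a b = e b a) ->
  forall q r, clos_refl_sym_trans (apt V) (arb_step e) q r ->
  arb_equiv e p q ->
  clos_refl_trans V (induced e (in_chart e p)) q.1 r.1.
Proof.
move=> Hsym q r H; elim: H => [x y Hxy|x|x y Hyx IH|x y z Hxy IH1 Hyz IH2] Hp.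
- have Hpy : arb_equiv e p y by apply: equiv_ext Hp (rst_step _ _ _ _ Hxy).
  case: Hxy => [wx [wy [exy _]]].
  apply: rt_step; split => //; split.
  + exact: inch Hp wx.
  + exact: inch Hpy wy.
- exact: rt_refl.
- have Hpy : arb_equiv e p x by apply: equiv_ext Hp (rst_sym _ _ _ _ Hyx).
  apply: crt_sym_gen (IH Hpy).
  move=> a b [Hab [Ha Hb]]; split; first by rewrite Hsym.
  by split.
- have Hpy : arb_equiv e p y by apply: equiv_ext Hp Hxy.
  exact: rt_trans (IH1 Hp) (IH2 Hpy).
Qed.

Theorem lemma2p10 (V : finType) (e : rel V) (p : apt V) :
  is_tree e -> wf_apt p -> tree_on e (in_chart e p).
Proof.
move=> [[Hirr Hsym] [_ [_ Hnc]]] wp.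
have Hp1 : in_chart e p p.1.
  by exists p.2; split; [case: p wp | left; case: p wp].
have Hfrom : forall a, in_chart e p a ->
    clos_refl_trans V (induced e (in_chart e p)) p.1 a.
  move=> a [f [wf [Heq|Hc]]].
  - by rewrite Heq; apply: rt_refl.
  - exact: (@L V e p Hsym p (a, f) Hc (or_introl erefl)).
split; first by exists p.1.
split.
- move=> a b Ha Hb.
  apply: rt_trans (Hfrom b Hb).
  apply: crt_sym_gen (Hfrom a Ha).
  move=> x y [Hxy [Hx Hy]]; split; first by rewrite Hsym.
  by split.
- move=> [c [x0 [Hs [Hu Hc]]]]; apply: Hnc.
  exists c, x0; split => //; split => //.
  move=> i Hi; case: (Hc i Hi) => [H1 _]; by split.
Qed.
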